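(* Let $2\le G\le 8$. For $p\in(0,1)$, let $r_1,\dots,r_G$ be i.i.d. $\mathrm{Bernoulli}(p)$, $R=\sum_j r_j$, $\hat p=R/G$, $\hat A_i=r_i-\hat p$, $A_i=r_i-p$, $\mathcal S=\{1\le R\le G-1\}$. For an interval $I\subseteq[0,1]$ of positive length and an event $E$, set $\mathbb P(E\mid\mathcal S,\ p\in I):=\frac{1}{|I|}\int_I \mathbb P_p(E\mid \mathcal S)\,dp$, where $\mathbb P_p$ is the law for expected reward $p$ (i.e. $p$ is uniformly distributed on $I$). Then for every $i\in[G]$: \[ \begin{aligned} &\mathbb P(\hat A_i<A_i\mid\mathcal S,\ p<0.5)>0.63, &&\mathbb P(\hat A_i>A_i\mid\mathcal S,\ p>0.5)>0.63,\\ &\mathbb P(\hat A_i<A_i\mid\mathcal S,\ p<0.25)>0.78, &&\mathbb P(\hat A_i>A_i\mid\mathcal S,\ p>0.75)>0.78,\\ &\mathbb P(\hat A_i<A_i\mid\mathcal S,\ p<0.125)=1, &&\mathbb P(\hat A_i>A_i\mid\mathcal S,\ p>0.875)=1. \end{aligned} \]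
   Context: Binary-reward group setting: $\hat p$ is the group baseline, $\hat A_i$ the group-relative advantage, $A_i$ the expected advantage, $\mathcal S$ the non-degenerate event. The expected reward $p$ is assumed uniformly distributed over $[0,1]$, and conditioning on $p$ lying in a subinterval is understood as averaging the conditional probability given $\mathcal S$ uniformly over that subinterval. *)

(* Defs.v *)
From Stdlib Require Import Reals List ClassicalDescription.
From Coquelicot Require Import Coquelicot.
Import ListNotations.
Open Scope R_scope.

Fixpoint outcomes (n : nat) : list (list bool) :=
  match n with
  | O => [nil]
  | S n' => flat_map (fun w => [true :: w; false :: w]) (outcomes n')
  end.

Definition b2R (b : bool) : R := if b then 1 else 0.

(* r_i (0-indexed, i < G) *)
Definition rew (i : nat) (w : list bool) : R := b2R (nth i w false).

Definition Rtot (w : list bool) : R := fold_right (fun (b : bool) (acc : R) => b2R b + acc) 0 w.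

Definition weight (p : R) (w : list bool) : R :=
  fold_right (fun (b : bool) (acc : R) => (if b then p else 1 - p) * acc) 1 w.

Definition prob (G : nat) (p : R) (E : list bool -> Prop) : R :=
  fold_right (fun (w : list bool) (acc : R) =>
     (if excluded_middle_informative (E w) then weight p w else 0) + acc)
    0 (outcomes G).

Definition phat (G : nat) (w : list bool) : R := Rtot w / INR G.
Definition Ahat (G i : nat) (w : list bool) : R := rew i w - phat G w.
Definition Aexp (p : R) (i : nat) (w : list bool) : R := rew i w - p.

Definition nondeg (G : nat) (w : list bool) : Prop :=
  1 <= Rtot w <= INR G - 1.

Definition condP (G : nat) (p : R) (E : list bool -> Prop) : R :=
  prob G p (fun w => E w /\ nondeg G w) / prob G p (nondeg G).

Definition avgCondP (G : nat) (a b : R) (E : R -> list bool -> Prop) : R :=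
  RInt (fun p => condP G p (E p)) a b / (b - a).

(* Main.v *)
Require Import Defs.
From Stdlib Require Import Reals List ClassicalDescription Lia Lra QArith Qreals Qround.
From Coquelicot Require Import Coquelicot.
Import ListNotations.
Open Scope R_scope.

Fixpoint cnt (w : list bool) : nat :=
  match w with nil => O | b :: w' => ((if b then 1 else 0) + cnt w')%nat end.

Lemma Rtot_cnt w : Rtot w = INR (cnt w).
Proof.
  induction w as [|b w IH]; simpl; [reflexivity|].
  rewrite IH, plus_INR. destruct b; simpl; lra.
Qed.

Fixpoint bprob (n : nat) (p : R) (q : nat -> bool) : R :=
  match n with
  | O => if q O then 1 else 0
  | S n' => p * bprob n' p (fun j => q (S j)) + (1 - p) * bprob n' p q
  end.

Definition sumL (f : list bool -> R) (L : list (list bool)) : R :=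
  fold_right (fun w acc => f w + acc) 0 L.

Lemma sumL_app f L1 L2 : sumL f (L1 ++ L2) = sumL f L1 + sumL f L2.
Proof. induction L1; simpl; [lra|]. unfold sumL in *; simpl; rewrite IHL1; lra. Qed.

Lemma sumL_flat f g L : sumL f (flat_map g L) = sumL (fun w => sumL f (g w)) L.
Proof. induction L; simpl; [reflexivity|]. rewrite sumL_app, IHL. reflexivity. Qed.

Lemma sumL_lin a b f g L :
  sumL (fun w => a * f w + b * g w) L = a * sumL f L + b * sumL g L.
Proof. induction L; unfold sumL in *; simpl; [lra|]. rewrite IHL; lra. Qed.

Lemma sumL_ext f g L : (forall w, f w = g w) -> sumL f L = sumL g L.
Proof. intro H; induction L; unfold sumL in *; simpl; [reflexivity|]. rewrite IHL, H; reflexivity. Qed.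

Lemma prob_S n p E : prob (S n) p E =
  p * prob n p (fun w => E (true :: w)) + (1 - p) * prob n p (fun w => E (false :: w)).
Proof.
  change (prob (S n) p E) with
    (sumL (fun w => if excluded_middle_informative (E w) then weight p w else 0) (outcomes (S n))).
  change (prob n p (fun w => E (true :: w))) with
    (sumL (fun w => if excluded_middle_informative (E (true :: w)) then weight p w else 0) (outcomes n)).
  change (prob n p (fun w => E (false :: w))) with
    (sumL (fun w => if excluded_middle_informative (E (false :: w)) then weight p w else 0) (outcomes n)).
  simpl outcomes. rewrite sumL_flat, <- sumL_lin. apply sumL_ext. intro w.
  unfold sumL; simpl.
  destruct (excluded_middle_informative (E (true :: w)));
  destruct (excluded_middle_informative (E (false :: w))); lra.
Qed.

Lemma prob_bprob n : forall p E q, (forall w, E w <-> q (cnt w) = true) ->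
  prob n p E = bprob n p q.
Proof.
  induction n as [|n IH]; intros p E q H.
  - unfold prob; simpl. specialize (H nil). simpl in H.
    destruct (excluded_middle_informative (E nil)) as [e|e];
    destruct (q O); try lra; [apply H in e; discriminate | exfalso; apply e, H; reflexivity].
  - rewrite prob_S. simpl. f_equal; f_equal; apply IH; intro w; rewrite H; simpl; reflexivity.
Qed.

Definition qD (G c : nat) : bool := (1 <=? c)%nat && (c <=? G - 1)%nat.
Definition qLt (G k c : nat) : bool := (S k <=? c)%nat && (c <=? G - 1)%nat.
Definition qGt (k c : nat) : bool := (1 <=? c)%nat && (c <=? k)%nat.

Lemma nondeg_iff G w : (1 <= G)%nat -> nondeg G w <-> qD G (cnt w) = true.
Proof.
  intro HG. unfold nondeg, qD. rewrite Rtot_cnt.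
  replace (INR G - 1) with (INR (G - 1)) by (rewrite minus_INR by lia; simpl; lra).
  rewrite andb_true_iff, !Nat.leb_le. split.
  - intros [h1 h2]. split; apply INR_le; simpl; lra.
  - intros [h1 h2]. split; [apply le_INR in h1; simpl in h1; lra | apply le_INR; exact h2].
Qed.

Lemma INR_lt_iff a b : INR a < INR b <-> (a < b)%nat.
Proof. split; [apply INR_lt | apply lt_INR]. Qed.

Lemma lt_iff G i p k w : (1 <= G)%nat -> INR k <= p * INR G < INR k + 1 ->
  (Ahat G i w < Aexp p i w /\ nondeg G w) <-> qLt G k (cnt w) = true.
Proof.
  intros HG Hp. unfold qLt. rewrite andb_true_iff, (nondeg_iff G w HG). unfold qD.
  rewrite andb_true_iff.
  assert (HG' : 0 < INR G) by (apply lt_0_INR; lia).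
  assert (E : Ahat G i w < Aexp p i w <-> (S k <=? cnt w)%nat = true).
  { unfold Ahat, Aexp, phat. rewrite Rtot_cnt, Nat.leb_le.
    split; intro H.
    - assert (H1 : p * INR G < INR (cnt w)).
      { apply (Rmult_lt_reg_r (/ INR G)). apply Rinv_0_lt_compat; lra.
        rewrite Rmult_assoc, Rinv_r by lra. lra. }
      assert (INR k < INR (cnt w)) by lra. apply INR_lt_iff in H0. lia.
    - apply le_INR in H. rewrite S_INR in H.
      assert (H1 : p < INR (cnt w) / INR G).
      { apply (Rmult_lt_reg_r (INR G)); [lra|]. unfold Rdiv. rewrite Rmult_assoc, Rinv_l by lra. lra. }
      lra. }
  rewrite E. rewrite !Nat.leb_le. lia.
Qed.

Lemma gt_iff G i p k w : (1 <= G)%nat -> (k <= G - 1)%nat -> INR k < p * INR G <= INR k + 1 ->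
  (Ahat G i w > Aexp p i w /\ nondeg G w) <-> qGt k (cnt w) = true.
Proof.
  intros HG Hk Hp. unfold qGt. rewrite andb_true_iff, (nondeg_iff G w HG). unfold qD.
  rewrite andb_true_iff.
  assert (HG' : 0 < INR G) by (apply lt_0_INR; lia).
  assert (E : Ahat G i w > Aexp p i w <-> (cnt w <=? k)%nat = true).
  { unfold Ahat, Aexp, phat. rewrite Rtot_cnt, Nat.leb_le.
    split; intro H.
    - assert (H1 : INR (cnt w) < p * INR G).
      { apply (Rmult_lt_reg_r (/ INR G)). apply Rinv_0_lt_compat; lra.
        rewrite Rmult_assoc, Rinv_r by lra. unfold Rdiv in H. lra. }
      assert (INR (cnt w) < INR k + 1) by lra. rewrite <- S_INR in H0.
      apply INR_lt_iff in H0. lia.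
    - apply le_INR in H.
      assert (H1 : INR (cnt w) / INR G < p).
      { apply (Rmult_lt_reg_r (INR G)); [lra|]. unfold Rdiv. rewrite Rmult_assoc, Rinv_l by lra. lra. }
      lra. }
  rewrite E. rewrite !Nat.leb_le. lia.
Qed.

Fixpoint horner (cs : list Q) (x : R) : R :=
  match cs with [] => 0 | c :: cs' => Q2R c + x * horner cs' x end.

Fixpoint padd (a b : list Q) : list Q :=
  match a, b with
  | [], _ => b
  | _, [] => a
  | x :: a', y :: b' => (x + y)%Q :: padd a' b'
  end.
Definition pscal (c : Q) (a : list Q) : list Q := map (Qmult c) a.
Fixpoint pmul (a b : list Q) : list Q :=
  match a with [] => [] | x :: a' => padd (pscal x b) (0%Q :: pmul a' b) end.

Lemma Q2R0 : Q2R 0 = 0. Proof. unfold Q2R; simpl; lra. Qed.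
Lemma Q2R1 : Q2R 1 = 1. Proof. unfold Q2R; simpl; lra. Qed.

Lemma horner_padd a : forall b x, horner (padd a b) x = horner a x + horner b x.
Proof.
  induction a as [|u a IH]; intros b x; simpl; [lra|].
  destruct b as [|v b]; simpl; [lra|]. rewrite IH, Q2R_plus. ring.
Qed.
Lemma horner_pscal c a x : horner (pscal c a) x = Q2R c * horner a x.
Proof. induction a; simpl; [ring|]. rewrite IHa, Q2R_mult. ring. Qed.
Lemma horner_pmul a b x : horner (pmul a b) x = horner a x * horner b x.
Proof.
  induction a as [|u a IH]; simpl; [ring|].
  rewrite horner_padd, horner_pscal. simpl. rewrite IH, Q2R0. ring.
Qed.

Fixpoint pb (n : nat) (q : nat -> bool) : list Q :=
  match n with
  | O => if q O then [1%Q] else []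
  | S n' => padd (pmul [0%Q; 1%Q] (pb n' (fun j => q (S j)))) (pmul [1%Q; (-1)%Q] (pb n' q))
  end.

Lemma horner_pb n : forall q x, horner (pb n q) x = bprob n x q.
Proof.
  induction n as [|n IH]; intros q x; cbn [pb bprob].
  - destruct (q O); simpl; [rewrite Q2R1|]; ring.
  - rewrite horner_padd, !horner_pmul, !IH. simpl. rewrite Q2R0, Q2R1. replace (Q2R (-1)) with (-1) by (unfold Q2R; simpl; lra). ring.
Qed.

Fixpoint rser (M : nat) (u : R) : R := match M with O => 0 | S M' => 1 + u * rser M' u end.
Fixpoint pser (M : nat) (u : list Q) : list Q :=
  match M with O => [] | S M' => padd [1%Q] (pmul u (pser M' u)) end.
Lemma horner_pser M u x : horner (pser M u) x = rser M (horner u x).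
Proof. induction M; cbn [pser rser]; [reflexivity|]. rewrite horner_padd, horner_pmul, IHM. simpl. rewrite Q2R1. ring. Qed.
Lemma rser_eq M u : rser M u * (1 - u) = 1 - u ^ M.
Proof. induction M; simpl; [ring|]. replace ((1 + u * rser M u) * (1 - u)) with (1 - u + u * (rser M u * (1 - u))) by ring. rewrite IHM. ring. Qed.

Lemma ser_bound M N u : 0 <= N -> 0 <= u < 1 -> N * rser M u <= N / (1 - u).
Proof.
  intros HN Hu. unfold Rdiv. apply Rmult_le_compat_l; [exact HN|].
  assert (H : rser M u = (1 - u ^ M) / (1 - u)).
  { rewrite <- rser_eq. field. lra. }
  rewrite H. unfold Rdiv. rewrite <- (Rmult_1_l (/ (1 - u))) at 2.
  apply Rmult_le_compat_r. left; apply Rinv_0_lt_compat; lra.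
  assert (0 <= u ^ M) by (apply pow_le; lra). lra.
Qed.

Fixpoint qpow (a : Q) (n : nat) : Q := match n with O => 1%Q | S n' => (a * qpow a n')%Q end.
Lemma Q2R_qpow a n : Q2R (qpow a n) = Q2R a ^ n.
Proof. induction n; simpl; [apply Q2R1|]. rewrite Q2R_mult, IHn. reflexivity. Qed.

Fixpoint peval' (n : nat) (cs : list Q) (x : R) : R :=
  match cs with [] => 0 | c :: cs' => Q2R c * x ^ n + peval' (S n) cs' x end.
Lemma peval'_horner cs : forall n x, peval' n cs x = x ^ n * horner cs x.
Proof. induction cs as [|c cs IH]; intros n x; simpl; [ring|]. rewrite IH. simpl. ring. Qed.

Fixpoint pintQ (n : nat) (cs : list Q) (a b : Q) : Q :=
  match cs with
  | [] => 0%Q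
  | c :: cs' => Qred (Qred (c * (qpow b (S n) - qpow a (S n)) / inject_Z (Z.of_nat (S n))) + pintQ (S n) cs' a b)
  end.

Lemma is_RInt_mono (n : nat) (a b : R) :
  is_RInt (fun x => x ^ n) a b ((b ^ S n - a ^ S n) / INR (S n)).
Proof.
  assert (HN : INR (S n) <> 0) by (apply not_0_INR; lia).
  replace ((b ^ S n - a ^ S n) / INR (S n)) with
    (minus ((fun x => x ^ S n / INR (S n)) b) ((fun x => x ^ S n / INR (S n)) a))
    by (unfold minus, plus, opp; simpl; field; exact HN).
  apply (is_RInt_derive (fun x => x ^ S n / INR (S n)) (fun x => x ^ n)).
  - intros x _. auto_derive; [exact I|]. change (match n with 0%nat => 1 | S _ => INR n + 1 end) with (INR (S n)). field. exact HN.
  - intros x _. apply (continuous_ext (fun x => x ^ n)); [reflexivity|].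
    induction n as [|n IH]; simpl.
    + apply continuous_const.
    + apply (continuous_mult (fun y => y) (fun y => y ^ n)); [apply continuous_id|].
      apply IH. apply not_0_INR; lia.
Qed.

Lemma Q2R_injZ n : Q2R (inject_Z (Z.of_nat n)) = INR n.
Proof. unfold Q2R; simpl. rewrite INR_IZR_INZ. field. Qed.

Lemma is_RInt_peval cs : forall n a b,
  is_RInt (peval' n cs) (Q2R a) (Q2R b) (Q2R (pintQ n cs a b)).
Proof.
  induction cs as [|c cs IH]; intros n a b; cbn [pintQ peval'].
  - rewrite Q2R0. assert (H := is_RInt_const (Q2R a) (Q2R b) 0).
    revert H. unfold scal; simpl; unfold mult; simpl. rewrite Rmult_0_r. auto.
  - rewrite (Qeq_eqR _ _ (Qred_correct _)), Q2R_plus, (Qeq_eqR _ _ (Qred_correct _)).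
    rewrite Q2R_div.
    2:{ intro H. apply Qeq_eqR in H. rewrite Q2R_injZ, Q2R0 in H. apply (not_0_INR (S n)); [lia|exact H]. }
    rewrite Q2R_mult, Q2R_minus, !Q2R_qpow, Q2R_injZ.
    apply (is_RInt_plus (fun x => Q2R c * x ^ n) (peval' (S n) cs)).
    + unfold Rdiv. rewrite Rmult_assoc. apply (is_RInt_scal (fun x => x ^ n)). apply is_RInt_mono.
    + apply IH.
Qed.

Lemma bprob_ext n : forall p q q', (forall c, q c = q' c) -> bprob n p q = bprob n p q'.
Proof.
  induction n as [|n IH]; intros p q q' H; simpl; [rewrite H; reflexivity|].
  rewrite (IH p (fun j => q (S j)) (fun j => q' (S j))) by (intro; apply H).
  rewrite (IH p q q') by exact H. reflexivity.
Qed.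

Lemma bprob_nonneg n : forall p q, 0 <= p <= 1 -> 0 <= bprob n p q.
Proof.
  induction n as [|n IH]; intros p q Hp; simpl; [destruct (q O); lra|].
  specialize (IH p (fun j => q (S j)) Hp) as H1. specialize (IH p q Hp) as H2.
  apply Rplus_le_le_0_compat; apply Rmult_le_pos; lra.
Qed.

Lemma bprob_compl n : forall p q, bprob n p q + bprob n p (fun c => negb (q c)) = 1.
Proof.
  induction n as [|n IH]; intros p q; simpl; [destruct (q O); simpl; lra|].
  specialize (IH p (fun j => q (S j))) as H1. specialize (IH p q) as H2. simpl in *. nra.
Qed.

Lemma bprob_pos n : forall p q c, 0 < p < 1 -> (c <= n)%nat -> q c = true -> 0 < bprob n p q.
Proof.
  induction n as [|n IH]; intros p q c Hp Hc Hq; simpl.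
  - assert (c = O) by lia. subst. rewrite Hq. lra.
  - assert (N1 := bprob_nonneg n p (fun j => q (S j)) ltac:(lra)).
    assert (N2 := bprob_nonneg n p q ltac:(lra)).
    destruct c as [|c].
    + assert (0 < bprob n p q) by (apply (IH p q O); auto; lia).
      assert (0 <= p * bprob n p (fun j => q (S j))) by (apply Rmult_le_pos; lra).
      assert (0 < (1 - p) * bprob n p q) by (apply Rmult_lt_0_compat; lra). lra.
    + assert (0 < bprob n p (fun j => q (S j))) by (apply (IH p _ c); auto; lia).
      assert (0 < p * bprob n p (fun j => q (S j))) by (apply Rmult_lt_0_compat; lra).
      assert (0 <= (1 - p) * bprob n p q) by (apply Rmult_le_pos; lra). lra.
Qed.

Lemma horner_cont cs x : continuous (horner cs) x.
Proof.
  induction cs as [|c cs IH]; simpl.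
  - apply continuous_const.
  - apply (continuous_plus (fun _ => Q2R c) (fun y => y * horner cs y)); [apply continuous_const|].
    apply (continuous_mult (fun y => y) (horner cs)); [apply continuous_id | exact IH].
Qed.

Definition Ed (dir : bool) (G i : nat) (p : R) (w : list bool) : Prop :=
  if dir then Ahat G i w < Aexp p i w else Ahat G i w > Aexp p i w.
Definition qN (dir : bool) (G k : nat) : nat -> bool := if dir then qLt G k else qGt k.
Definition trivialb (dir : bool) (G k : nat) : bool :=
  if dir then Nat.eqb k 0 else Nat.eqb k (G - 1).
Definition fcond dir G i p := condP G p (Ed dir G i p).

Definition hpoly (dir : bool) (G k M : nat) : list Q :=
  pmul (pb G (qN dir G k)) (pser M (padd [1%Q] (pscal (-1)%Q (pb G (qD G))))).

Lemma fcond_eq dir G i k p : (2 <= G)%nat -> (k <= G - 1)%nat ->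
  INR k < p * INR G < INR k + 1 ->
  fcond dir G i p = bprob G p (qN dir G k) / bprob G p (qD G).
Proof.
  intros HG Hk Hp. unfold fcond, condP.
  rewrite (prob_bprob G p (nondeg G) (qD G)) by (intro w; apply nondeg_iff; lia).
  f_equal. apply prob_bprob. intro w. unfold Ed, qN. destruct dir.
  - apply lt_iff; [lia|lra].
  - apply gt_iff; [lia|lia|lra].
Qed.

Lemma D_pos G p : (2 <= G)%nat -> 0 < p < 1 -> 0 < bprob G p (qD G).
Proof. intros HG Hp. apply (bprob_pos G p (qD G) 1); [exact Hp|lia|]. unfold qD. rewrite andb_true_iff, !Nat.leb_le. lia. Qed.

Lemma D_le1 G p : 0 <= p <= 1 -> bprob G p (qD G) <= 1.
Proof. intro Hp. assert (H := bprob_compl G p (qD G)).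
  assert (H2 := bprob_nonneg G p (fun c => negb (qD G c)) Hp). lra. Qed.

Lemma piece_nontriv dir G i k M (x y : R) :
  (2 <= G)%nat -> (k <= G - 1)%nat -> 0 < x -> x < y -> y < 1 ->
  INR k <= x * INR G -> y * INR G <= INR k + 1 ->
  ex_RInt (fcond dir G i) x y /\
  RInt (horner (hpoly dir G k M)) x y <= RInt (fcond dir G i) x y /\
  ex_RInt (horner (hpoly dir G k M)) x y.
Proof.
  intros HG Hk Hx Hxy Hy H1 H2.
  assert (HGp : 0 < INR G) by (apply lt_0_INR; lia).
  set (g := fun p => horner (pb G (qN dir G k)) p / horner (pb G (qD G)) p).
  assert (Hfg : forall p, Rmin x y < p < Rmax x y -> g p = fcond dir G i p).
  { intros p Hp. rewrite Rmin_left, Rmax_right in Hp by lra.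
    unfold g. rewrite !horner_pb. symmetry. apply fcond_eq; try lia.
    split; nra. }
  assert (Hg : ex_RInt g x y).
  { apply (ex_RInt_continuous (V:=R_CompleteNormedModule)). intros z Hz. rewrite Rmin_left, Rmax_right in Hz by lra.
    unfold g. apply (continuous_mult (horner _) (fun p => / horner (pb G (qD G)) p)).
    apply horner_cont. apply continuous_Rinv_comp. apply horner_cont.
    rewrite horner_pb. apply Rgt_not_eq, D_pos; [exact HG|lra]. }
  assert (Hh : ex_RInt (horner (hpoly dir G k M)) x y).
  { apply (ex_RInt_continuous (V:=R_CompleteNormedModule)). intros; apply horner_cont. }
  split; [exact (ex_RInt_ext g (fcond dir G i) x y Hfg Hg)|]. split; [|exact Hh].
  rewrite <- (RInt_ext g (fcond dir G i) x y Hfg).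
  apply RInt_le; [lra|exact Hh|exact Hg|].
  intros p Hp. unfold hpoly, g. rewrite horner_pmul, horner_pser, horner_padd, horner_pscal.
  simpl. rewrite !horner_pb.
  replace (Q2R 1 + p * 0 + Q2R (-1) * bprob G p (qD G)) with (1 - bprob G p (qD G))
    by (unfold Q2R; simpl; lra).
  replace (bprob G p (qD G)) with (1 - (1 - bprob G p (qD G))) at 2 by ring.
  apply ser_bound. apply bprob_nonneg; lra.
  assert (0 < bprob G p (qD G)) by (apply D_pos; [exact HG|lra]).
  assert (bprob G p (qD G) <= 1) by (apply D_le1; lra). lra.
Qed.

Lemma piece_triv dir G i k (x y : R) :
  (2 <= G)%nat -> (k <= G - 1)%nat -> trivialb dir G k = true -> 0 <= x -> x < y -> y <= 1 ->
  INR k <= x * INR G -> y * INR G <= INR k + 1 ->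
  ex_RInt (fcond dir G i) x y /\ RInt (fcond dir G i) x y = y - x.
Proof.
  intros HG Hk Ht Hx Hxy Hy H1 H2.
  assert (HGp : 0 < INR G) by (apply lt_0_INR; lia).
  assert (Hfg : forall p, Rmin x y < p < Rmax x y -> (fun _ => 1) p = fcond dir G i p).
  { intros p Hp. rewrite Rmin_left, Rmax_right in Hp by lra.
    rewrite (fcond_eq dir G i k p) by (try lia; split; nra).
    rewrite (bprob_ext G p (qN dir G k) (qD G)).
    - field. apply Rgt_not_eq, D_pos; [exact HG|lra].
    - intro c. unfold qN, qLt, qGt, qD, trivialb in *. destruct dir.
      + apply Nat.eqb_eq in Ht. subst. reflexivity.
      + apply Nat.eqb_eq in Ht. subst. rewrite andb_comm. reflexivity. }
  split.
  - apply (ex_RInt_ext (fun _ => 1)); [exact Hfg|]. apply ex_RInt_const.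
  - rewrite <- (RInt_ext (fun _ => 1)) by exact Hfg. rewrite RInt_const.
    unfold scal; simpl; unfold mult; simpl. ring.
Qed.

Definition QN (k : nat) : Q := inject_Z (Z.of_nat k).
Definition Qltb (a b : Q) : bool := negb (Qle_bool b a).

Lemma QleR a b : Qle_bool a b = true -> Q2R a <= Q2R b.
Proof. intro H. apply Qle_Rle. apply Qle_bool_iff. exact H. Qed.
Lemma QltR a b : Qltb a b = true -> Q2R a < Q2R b.
Proof. unfold Qltb. intro H. apply Qlt_Rlt. apply Qnot_le_lt. intro H'.
  apply Qle_bool_iff in H'. rewrite H' in H. discriminate. Qed.
Lemma QeqR a b : Qeq_bool a b = true -> Q2R a = Q2R b.
Proof. intro H. apply Qeq_eqR. apply Qeq_bool_iff. exact H. Qed.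
Lemma Q2R_QN k : Q2R (QN k) = INR k.
Proof. apply Q2R_injZ. Qed.

Definition pieceOK (dir : bool) (G : nat) (pc : Q * Q * nat) : bool :=
  let '(x, y, k) := pc in
  (k <=? G - 1)%nat && Qle_bool 0 x && Qltb x y && Qle_bool y 1 &&
  Qle_bool (QN k) (x * QN G) && Qle_bool (y * QN G) (QN k + 1) &&
  (trivialb dir G k || (Qltb 0 x && Qltb y 1)).

Definition pieceLB (dir : bool) (G M : nat) (pc : Q * Q * nat) : Q :=
  let '(x, y, k) := pc in
  if trivialb dir G k then (y - x)%Q else pintQ 0 (hpoly dir G k M) x y.

Lemma RInt_horner cs a b : RInt (horner cs) (Q2R a) (Q2R b) = Q2R (pintQ 0 cs a b).
Proof.
  apply is_RInt_unique. apply (is_RInt_ext (peval' 0 cs)).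
  - intros x _. rewrite peval'_horner. simpl. ring.
  - apply is_RInt_peval.
Qed.

Lemma piece_sound dir G i M pc : (2 <= G)%nat -> pieceOK dir G pc = true ->
  let '(x, y, k) := pc in
  ex_RInt (fcond dir G i) (Q2R x) (Q2R y) /\
  Q2R (pieceLB dir G M pc) <= RInt (fcond dir G i) (Q2R x) (Q2R y).
Proof.
  intro HG. destruct pc as [[x y] k]. unfold pieceOK, pieceLB.
  rewrite !andb_true_iff. intros [[[[[[Hk H0x] Hxy] Hy1] H1] H2] Ht].
  apply Nat.leb_le in Hk. apply QleR in H0x, Hy1, H1, H2. apply QltR in Hxy.
  rewrite Q2R_mult, !Q2R_QN in H1. rewrite Q2R_plus, Q2R_mult, !Q2R_QN, Q2R1 in H2.
  rewrite Q2R0 in H0x. rewrite Q2R1 in Hy1.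
  destruct (trivialb dir G k) eqn:Etr.
  - destruct (piece_triv dir G i k (Q2R x) (Q2R y)) as [E1 E2]; try assumption.
    split; [exact E1|]. rewrite E2, Q2R_minus. lra.
  - simpl in Ht. rewrite andb_true_iff in Ht. destruct Ht as [Hx Hy].
    apply QltR in Hx, Hy. rewrite Q2R0 in Hx. rewrite Q2R1 in Hy.
    destruct (piece_nontriv dir G i k M (Q2R x) (Q2R y)) as [E1 [E2 E3]]; try assumption.
    split; [exact E1|]. rewrite <- RInt_horner. exact E2.
Qed.

Fixpoint chainOK (dir : bool) (G : nat) (a b : Q) (pcs : list (Q * Q * nat)) : bool :=
  match pcs with
  | [] => false
  | pc :: rest =>
    let '(x, y, k) := pc in
    Qeq_bool x a && pieceOK dir G pc &&
    match rest with [] => Qeq_bool y b | _ => chainOK dir G y b rest end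
  end.

Definition sumLB dir G M (pcs : list (Q * Q * nat)) : Q :=
  fold_right (fun pc acc => (pieceLB dir G M pc + acc)%Q) 0%Q pcs.

Lemma chain_sound dir G i M pcs : (2 <= G)%nat -> forall a b, chainOK dir G a b pcs = true ->
  ex_RInt (fcond dir G i) (Q2R a) (Q2R b) /\
  Q2R (sumLB dir G M pcs) <= RInt (fcond dir G i) (Q2R a) (Q2R b).
Proof.
  intro HG. induction pcs as [|pc rest IH]; intros a b H; [discriminate|].
  destruct pc as [[x y] k]. cbn [chainOK] in H.
  apply andb_prop in H. destruct H as [H Hrest]. apply andb_prop in H. destruct H as [Hxa Hok]. apply QeqR in Hxa.
  assert (P := piece_sound dir G i M (x, y, k) HG Hok). destruct P as [P1 P2].
  change (sumLB dir G M ((x,y,k)::rest)) with (pieceLB dir G M (x,y,k) + sumLB dir G M rest)%Q.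
  rewrite Q2R_plus.
  destruct rest as [|pc' rest'].
  - apply QeqR in Hrest. rewrite <- Hxa, <- Hrest. change (sumLB dir G M []) with 0%Q. rewrite Q2R0.
    split; [exact P1|lra].
  - destruct (IH y b Hrest) as [I1 I2]. rewrite <- Hxa. split.
    + apply (ex_RInt_Chasles _ _ (Q2R y)); assumption.
    + rewrite <- (RInt_Chasles _ (Q2R x) (Q2R y) (Q2R b)) by assumption.
      set (L1 := Q2R (pieceLB dir G M (x, y, k))) in *. set (L2 := Q2R (sumLB dir G M (pc' :: rest'))) in *. unfold plus; simpl. lra.
Qed.

Lemma avg_lb dir G i M pcs a b c : (2 <= G)%nat -> chainOK dir G a b pcs = true ->
  Qltb a b = true -> Qltb (c * (b - a)) (sumLB dir G M pcs) = true ->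
  avgCondP G (Q2R a) (Q2R b) (Ed dir G i) > Q2R c.
Proof.
  intros HG Hc Hab Hs. destruct (chain_sound dir G i M pcs HG a b Hc) as [_ H].
  apply QltR in Hab, Hs. rewrite Q2R_mult, Q2R_minus in Hs.
  unfold avgCondP. change (fun p => condP G p (Ed dir G i p)) with (fcond dir G i).
  apply Rlt_gt. apply (Rmult_lt_reg_r (Q2R b - Q2R a)); [lra|].
  unfold Rdiv. rewrite Rmult_assoc, Rinv_l by lra. lra.
Qed.

Lemma avg_one dir G i a b k : (2 <= G)%nat -> pieceOK dir G (a, b, k) = true ->
  trivialb dir G k = true ->
  avgCondP G (Q2R a) (Q2R b) (Ed dir G i) = 1.
Proof.
  intros HG Hok Ht. assert (P := piece_sound dir G i 0 (a, b, k) HG Hok). simpl in P.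
  unfold pieceOK in Hok. rewrite !andb_true_iff in Hok.
  destruct Hok as [[[[[[Hk H0x] Hxy] Hy1] H1] H2] _].
  apply Nat.leb_le in Hk. apply QleR in H0x, Hy1, H1, H2. apply QltR in Hxy.
  rewrite Q2R_mult, !Q2R_QN in H1. rewrite Q2R_plus, Q2R_mult, !Q2R_QN, Q2R1 in H2.
  rewrite Q2R0 in H0x. rewrite Q2R1 in Hy1.
  destruct (piece_triv dir G i k (Q2R a) (Q2R b)) as [_ E]; try assumption.
  unfold avgCondP. change (fun p => condP G p (Ed dir G i p)) with (fcond dir G i).
  rewrite E. field. lra.
Qed.

Definition kof (G : nat) (x : Q) : nat := Z.to_nat (Qfloor (x * QN G)).
Fixpoint mkpcs (G : nat) (x : Q) (pts : list Q) : list (Q * Q * nat) :=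
  match pts with
  | [] => []
  | y :: pts' => (x, y, kof G x) :: mkpcs G y pts'
  end.
Definition pieces (G : nat) (a b : Q) : list (Q * Q * nat) :=
  mkpcs G a (filter (fun q => Qltb a q && Qltb q b) (map (fun k => Qmake (Z.of_nat k) (Pos.of_nat G)) (seq 1 (G - 1))) ++ [b]).

Definition check (dir : bool) (G M : nat) (a b c : Q) : bool :=
  let pcs := pieces G a b in
  chainOK dir G a b pcs && Qltb a b && Qltb (c * (b - a)) (sumLB dir G M pcs).

Lemma check_sound dir G i M a b c : (2 <= G)%nat -> check dir G M a b c = true ->
  avgCondP G (Q2R a) (Q2R b) (Ed dir G i) > Q2R c.
Proof.
  intros HG H. unfold check in H. rewrite !andb_true_iff in H. destruct H as [[H1 H2] H3].
  eapply avg_lb; eassumption.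
Qed.


Lemma all_checks G : (2 <= G <= 8)%nat ->
  check true G 5 0 (1#2) (63#100) = true /\
  check false G 5 (1#2) 1 (63#100) = true /\
  check true G 5 0 (1#4) (78#100) = true /\
  check false G 5 (3#4) 1 (78#100) = true /\
  pieceOK true G (0, 1#8, 0%nat)%Q = true /\
  pieceOK false G (7#8, 1, (G-1)%nat)%Q = true.
Proof.
  intro H.
  assert (G = 2 \/ G = 3 \/ G = 4 \/ G = 5 \/ G = 6 \/ G = 7 \/ G = 8)%nat as HH by lia.
  repeat destruct HH as [HH|HH]; subst G; vm_compute; repeat split.
Qed.

Theorem corollary1 (G : nat) (HG : (2 <= G <= 8)%nat) (i : nat) (Hi : (i < G)%nat) :
  avgCondP G 0 (1/2) (fun p w => Ahat G i w < Aexp p i w) > 63/100 /\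
  avgCondP G (1/2) 1 (fun p w => Ahat G i w > Aexp p i w) > 63/100 /\
  avgCondP G 0 (1/4) (fun p w => Ahat G i w < Aexp p i w) > 78/100 /\
  avgCondP G (3/4) 1 (fun p w => Ahat G i w > Aexp p i w) > 78/100 /\
  avgCondP G 0 (1/8) (fun p w => Ahat G i w < Aexp p i w) = 1 /\
  avgCondP G (7/8) 1 (fun p w => Ahat G i w > Aexp p i w) = 1.
Proof.
  destruct (all_checks G HG) as [C1 [C2 [C3 [C4 [C5 C6]]]]].
  assert (HG2 : (2 <= G)%nat) by lia.
  assert (Z0 : Q2R 0 = 0) by (unfold Q2R; simpl; lra).
  assert (Z1 : Q2R 1 = 1) by (unfold Q2R; simpl; lra).
  assert (Z2 : Q2R (1#2) = 1/2) by (unfold Q2R; simpl; lra).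
  assert (Z4 : Q2R (1#4) = 1/4) by (unfold Q2R; simpl; lra).
  assert (Z34 : Q2R (3#4) = 3/4) by (unfold Q2R; simpl; lra).
  assert (Z8 : Q2R (1#8) = 1/8) by (unfold Q2R; simpl; lra).
  assert (Z78 : Q2R (7#8) = 7/8) by (unfold Q2R; simpl; lra).
  assert (Z63 : Q2R (63#100) = 63/100) by (unfold Q2R; simpl; lra).
  assert (Z78' : Q2R (78#100) = 78/100) by (unfold Q2R; simpl; lra).
  assert (S1 := check_sound true G i 5 _ _ _ HG2 C1).
  assert (S2 := check_sound false G i 5 _ _ _ HG2 C2).
  assert (S3 := check_sound true G i 5 _ _ _ HG2 C3).
  assert (S4 := check_sound false G i 5 _ _ _ HG2 C4).
  assert (S5 := avg_one true G i _ _ _ HG2 C5 eq_refl).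
  assert (S6 := avg_one false G i _ _ _ HG2 C6 ltac:(unfold trivialb; apply Nat.eqb_refl)).
  rewrite Z0, Z2, Z63 in S1. rewrite Z1, Z2, Z63 in S2.
  rewrite Z0, Z4, Z78' in S3. rewrite Z1, Z34, Z78' in S4.
  rewrite Z0, Z8 in S5. rewrite Z1, Z78 in S6.
  unfold Ed in *. repeat split; assumption.
Qed.
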